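(* Let $(L,[\cdot,\cdot,\cdot],\alpha,\omega)$ be a symplectic 3-Hom-Lie algebra. Then the trilinear operation $\{\cdot,\cdot,\cdot\}$ on $L$ determined by $$\omega(\{x,y,z\},\alpha(w))=-\omega(\alpha(z),[x,y,w])\quad\text{for all }x,y,z,w\in L$$ makes $(L,\{\cdot,\cdot,\cdot\},\alpha)$ a 3-Hom-pre-Lie algebra compatible with $L$, i.e. $\{x,y,z\}+\{y,z,x\}+\{z,x,y\}=[x,y,z]$ for all $x,y,z\in L$.
   Context: A 3-Hom-Lie algebra is a triple $(L,[\cdot,\cdot,\cdot],\alpha)$ with $[\cdot,\cdot,\cdot]:\wedge^3L\to L$ skew-symmetric trilinear and $\alpha$ linear satisfying $[\alpha(x),\alpha(y),[u,v,w]]=[[x,y,u],\alpha(v),\alpha(w)]+[\alpha(u),[x,y,v],\alpha(w)]+[\alpha(u),\alpha(v),[x,y,w]]$; it is regular if $\alpha$ is an algebra automorphism. A symplectic 3-Hom-Lie algebra $(L,[\cdot,\cdot,\cdot],\alpha,\omega)$ is a regular 3-Hom-Lie algebra with a nondegenerate skew-symmetric bilinear form $\omega$ such that $\omega(\alpha(x),\alpha(y))=\omega(x,y)$ and $\omega([x,y,z],\alpha(w))-\omega([y,z,w],\alpha(x))+\omega([z,w,x],\alpha(y))-\omega([w,x,y],\alpha(z))=0$ for all $x,y,z,w$. A 3-Hom-pre-Lie algebra is $(L,\{\cdot,\cdot,\cdot\},\alpha)$ with trilinear $\{\cdot,\cdot,\cdot\}$ such that, with $[x,y,z]_C=\{x,y,z\}+\{y,z,x\}+\{z,x,y\}$: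 $\{x,y,z\}=-\{y,x,z\}$; $\{\alpha(x),\alpha(y),\{z,u,v\}\}=\{[x,y,z]_C,\alpha(u),\alpha(v)\}+\{\alpha(z),[x,y,u]_C,\alpha(v)\}+\{\alpha(z),\alpha(u),\{x,y,v\}\}$; $\{[x,y,z]_C,\alpha(u),\alpha(v)\}=\{\alpha(x),\alpha(y),\{z,u,v\}\}+\{\alpha(y),\alpha(z),\{x,u,v\}\}+\{\alpha(z),\alpha(x),\{y,u,v\}\}$. *)

(* Defs.v *)
From HB Require Import structures.
From mathcomp Require Import all_boot all_order all_algebra.
Set Implicit Arguments. Unset Strict Implicit. Unset Printing Implicit Defensive.
Import GRing.Theory.
Local Open Scope ring_scope.

Section Defs.
Variables (K : fieldType) (L : lmodType K).

Definition trilinear (f : L -> L -> L -> L) : Prop :=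
  [/\ forall (a : K) x x' y z, f (a *: x + x') y z = a *: f x y z + f x' y z,
      forall (a : K) x y y' z, f x (a *: y + y') z = a *: f x y z + f x y' z
    & forall (a : K) x y z z', f x y (a *: z + z') = a *: f x y z + f x y z'].

Definition alternating3 (f : L -> L -> L -> L) : Prop :=
  [/\ forall x z, f x x z = 0, forall x y, f x y y = 0 & forall x y, f x y x = 0].

Definition linear_map (al : L -> L) : Prop :=
  forall (a : K) x y, al (a *: x + y) = a *: al x + al y.

Definition hom_lie3 (br : L -> L -> L -> L) (al : L -> L) : Prop :=
  [/\ trilinear br, alternating3 br, linear_map al &
   forall x y u v w,
     br (al x) (al y) (br u v w) =
       br (br x y u) (al v) (al w) + br (al u) (br x y v) (al w)
       + br (al u) (al v) (br x y w)].

Definition regular_hom_lie3 br al : Prop :=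
  [/\ hom_lie3 br al, bijective al &
      forall x y z, al (br x y z) = br (al x) (al y) (al z)].

Definition bilinear_form (om : L -> L -> K) : Prop :=
  (forall (a : K) x x' y, om (a *: x + x') y = a * om x y + om x' y) /\
  (forall (a : K) x y y', om x (a *: y + y') = a * om x y + om x y').

Definition symplectic_hom_lie3 br al (om : L -> L -> K) : Prop :=
  [/\ regular_hom_lie3 br al, bilinear_form om /\
      (forall x y, om x y = - om y x),
      (forall x, (forall y, om x y = 0) -> x = 0),
      (forall x y, om (al x) (al y) = om x y) &
      forall x y z w,
        om (br x y z) (al w) - om (br y z w) (al x) + om (br z w x) (al y)
        - om (br w x y) (al z) = 0].

Definition cyc3 (pr : L -> L -> L -> L) x y z : L :=
  pr x y z + pr y z x + pr z x y.

Definition hom_pre_lie3 (pr : L -> L -> L -> L) (al : L -> L) : Prop :=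
  [/\ trilinear pr, linear_map al,
      (forall x y z, pr x y z = - pr y x z),
      (forall x y z u v,
         pr (al x) (al y) (pr z u v) =
           pr (cyc3 pr x y z) (al u) (al v) + pr (al z) (cyc3 pr x y u) (al v)
           + pr (al z) (al u) (pr x y v)) &
      (forall x y z u v,
         pr (cyc3 pr x y z) (al u) (al v) =
           pr (al x) (al y) (pr z u v) + pr (al y) (al z) (pr x u v)
           + pr (al z) (al x) (pr y u v))].

End Defs.

(* Main.v *)
Require Import Defs.
From HB Require Import structures.
From mathcomp Require Import all_boot all_order all_algebra.
From mathcomp Require Import ring.
Import GRing.Theory.
Local Open Scope ring_scope.

Theorem proposition5p6 (K : fieldType) (L : lmodType K)
    (br : L -> L -> L -> L) (al : L -> L) (om : L -> L -> K)
    (pr : L -> L -> L -> L) :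
  symplectic_hom_lie3 br al om ->
  trilinear pr ->
  (forall x y z w, om (pr x y z) (al w) = - om (al z) (br x y w)) ->
  hom_pre_lie3 pr al /\ (forall x y z, cyc3 pr x y z = br x y z).
Proof.
move=> [[[[brD1 brD2 brD3] [alt1 alt2 alt3] alL FI] [g alK gK] brhom]
        [[omD1 omD2] omskew] omnd ominv symp] prT G.
have omDl : forall x x' y, om (x + x') y = om x y + om x' y.
  by move=> x x' y; rewrite -[x in LHS]scale1r omD1 mul1r.
have omDr : forall x y y', om x (y + y') = om x y + om x y'.
  by move=> x y y'; rewrite -[y in LHS]scale1r omD2 mul1r.
have om0l : forall y, om 0 y = 0.
  by move=> y; apply: (@addrI _ (om 0 y)); rewrite -omDl !addr0.
have om0r : forall y, om y 0 = 0.
  by move=> y; apply: (@addrI _ (om y 0)); rewrite -omDr !addr0.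
have omNl : forall x y, om (- x) y = - om x y.
  by move=> x y; apply/eqP; rewrite -addr_eq0 -omDl addNr om0l.
have omNr : forall x y, om y (- x) = - om y x.
  by move=> x y; apply/eqP; rewrite -addr_eq0 -omDr addNr om0r.
have brDa : forall x x' y z, br (x + x') y z = br x y z + br x' y z.
  by move=> x x' y z; rewrite -[x in LHS]scale1r brD1 scale1r.
have brDb : forall x y y' z, br x (y + y') z = br x y z + br x y' z.
  by move=> x y y' z; rewrite -[y in LHS]scale1r brD2 scale1r.
have brDc : forall x y z z', br x y (z + z') = br x y z + br x y z'.
  by move=> x y z z'; rewrite -[z in LHS]scale1r brD3 scale1r.
have br12 : forall x y z, br y x z = - br x y z.
  move=> x y z; apply/eqP; rewrite -addr_eq0 addrC.
  by have := alt1 (x + y) z; rewrite brDa !brDb !alt1 add0r addr0 => ->.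
have br23 : forall x y z, br x z y = - br x y z.
  move=> x y z; apply/eqP; rewrite -addr_eq0 addrC.
  by have := alt2 x (y + z); rewrite brDb !brDc !alt2 add0r addr0 => ->.
have brcyc : forall x y z, br y z x = br x y z.
  by move=> x y z; rewrite br23 br12 opprK.
have alD : forall x y, al (x + y) = al x + al y.
  by move=> x y; rewrite -[x in LHS]scale1r alL scale1r.
have eqt : forall p q, (forall D, om p (al D) = om q (al D)) -> p = q.
  move=> p q H; apply/eqP; rewrite -subr_eq0; apply/eqP; apply: omnd => y.
  by rewrite omDl omNl -(gK y) H subrr.
have eqt3 : forall p q, (forall D, om p (al (al (al D))) = om q (al (al (al D)))) -> p = q.
  by move=> p q H; apply: eqt => D; rewrite -(gK D) -(gK (g D)) H.
have G' : forall a b c w, om (pr a b c) (al w) = om (br a b w) (al c).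
  by move=> a b c w; rewrite G omskew opprK.
have C : forall x y z, cyc3 pr x y z = br x y z.
  move=> x y z; apply: eqt => w; rewrite /cyc3 !omDl !G'.
  have := symp x y z w; rewrite (br23 z x w) (brcyc y w x) (brcyc x y w) omNl => h.
  by rewrite -[RHS]subr0 -h; ring.
have P4 : forall X Y Z U v,
    pr (al (al X)) (al (al Y)) (pr (al Z) (al U) v) =
    pr (br (al X) (al Y) (al Z)) (al (al U)) (al v)
    + pr (al (al Z)) (br (al X) (al Y) (al U)) (al v)
    + pr (al (al Z)) (al (al U)) (pr (al X) (al Y) v).
  move=> X Y Z U v; apply: eqt3 => D; rewrite !omDl !G' -!brhom !ominv.
  rewrite !(omskew (al _) (pr _ _ _)) !G' (FI X Y Z U D) !omDl.
  ring.
have br0c : forall x y, br x y 0 = 0.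
  by move=> x y; apply: (@addrI _ (br x y 0)); rewrite -brDc !addr0.
have brNc : forall x y z, br x y (- z) = - br x y z.
  by move=> x y z; apply/eqP; rewrite -addr_eq0 -brDc addNr br0c.
have P5 : forall X Y Z U v,
    pr (br (al X) (al Y) (al Z)) (al (al U)) (al v) =
    pr (al (al X)) (al (al Y)) (pr (al Z) (al U) v)
    + pr (al (al Y)) (al (al Z)) (pr (al X) (al U) v)
    + pr (al (al Z)) (al (al X)) (pr (al Y) (al U) v).
  move=> X Y Z U v; apply: eqt3 => D; rewrite !omDl !G' -!brhom !ominv.
  rewrite !(omskew (al _) (pr _ _ _)) !G'.
  have h1 := FI X Y Z U D; rewrite (br23 (al Z) (al D)) in h1.
  have h2 := FI Z D X Y U.
  rewrite -(brcyc (br Z D X)) (br23 Z X D) (br23 (al X) (al U)) (brcyc Y Z D) (br23 Z U D) in h2.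
  rewrite !brNc in h2.
  move/(congr1 (om^~ (al v))): h1; rewrite !omDl !omNl => h1.
  move/(congr1 (om^~ (al v))): h2; rewrite !omDl !omNl => h2.
  rewrite h2 in h1; apply/eqP; rewrite -subr_eq0; apply/eqP.
  rewrite -[RHS](subrr (om (br (al X) (al Y) (br Z U D)) (al v))) {1}h1.
  ring.
split; last exact: C.
split => //.
- by move=> x y z; apply: eqt => w; rewrite G' omNl G' br12 omNl.
- move=> x y z u v; rewrite !C -(gK x) -(gK y) -(gK z) -(gK u); exact: P4.
- move=> x y z u v; rewrite !C -(gK x) -(gK y) -(gK z) -(gK u); exact: P5.
Qed.
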